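(* Let $\frac{4}{3}<p\le 1.73$ and $0\le\alpha\le\frac{\pi}{3}$. The function $R(\rho)=\sin^p\rho+\sin^p(\alpha-\rho)$ on $0\le\rho\le\frac{\alpha}{2}$ attains its minimum at one of the endpoints $\rho=0$ or $\rho=\frac{\alpha}{2}$. *)

(* Defs.v *)
From HB Require Import structures.
From mathcomp Require Import all_boot all_order all_algebra.
From mathcomp Require Import all_classical all_reals all_analysis.
Import Order.TTheory GRing.Theory Num.Theory.
Local Open Scope ring_scope.

Definition Rfun {R : realType} (p alpha rho : R) : R :=
  (sin rho) `^ p + (sin (alpha - rho)) `^ p.

(* Main.v *)
Require Import Defs.
From HB Require Import structures.
From mathcomp Require Import all_boot all_order all_algebra.
From mathcomp Require Import all_classical all_reals all_analysis.
From mathcomp Require Import ring lra.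
Import Order.TTheory GRing.Theory Num.Theory numFieldNormedType.Exports.
Local Open Scope ring_scope.

Section S.
Context {R : realType}.

Lemma cos_pi3 : cos (pi / 3) = 1/2 :> R.
Proof.
set x := pi / 3.
have hpi : pi = x + (x + x) by rewrite /x; field.
have := @cospi R; rewrite hpi cosD cosD sinD.
set c := cos x; set s := sin x => H.
have hc : 0 < c.
  apply: cos_gt0_pihalf; have := @pi_gt0 R; rewrite /x => ?.
  apply/andP; split; lra.
have hcs : c ^+ 2 + s ^+ 2 = 1 by rewrite /c /s cos2Dsin2.
have E : (c + 1) * (2 * c - 1) ^+ 2 =
  c * (c * c - s * s) - s * (s * c + c * s) + 1 + 3 * c * (c ^+ 2 + s ^+ 2 - 1)
  by ring.
rewrite H hcs subrr mulr0 addr0 addNr in E.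
move/eqP: E; rewrite mulf_eq0 sqrf_eq0 => /orP[/eqP|/eqP]; lra.
Qed.

Lemma cos_ge_half a : 0 <= a -> a <= pi / 3 -> 1/2 <= cos a :> R.
Proof.
move=> a0 a3; rewrite -cos_pi3.
have hpi := @pi_gt0 R.
rewrite leNgt ltr_cos ?in_itv/= -?leNgt //; apply/andP; split; lra.
Qed.

Lemma kineq (u v : R) : 0 < u -> u < v -> u + v <= pi / 3 ->
  sin u * cos u ^+ 3 <= sin v * cos v ^+ 3.
Proof.
move=> u0 uv uv3.
have hpi := @pi_gt0 R.
have hX : 0 <= sin (v - u).
  apply: sin_ge0_pi; apply/andP; split; lra.
have hA : 1/2 <= cos (u + v) by apply: cos_ge_half; lra.
have hA1 : cos (u + v) <= 1 by apply: cos_le1.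
have hB : 0 <= cos (v - u).
  apply: cos_ge0_pihalf; apply/andP; split; lra.
have hB1 : cos (v - u) <= 1 by apply: cos_le1.
rewrite sinB in hX; rewrite cosD in hA hA1; rewrite cosB in hB hB1.
have hu := cos2Dsin2 u; have hv := cos2Dsin2 v.
set su := sin u in hX hA hA1 hB hB1 hu *; set cu := cos u in hX hA hA1 hB hB1 hu *.
set sv := sin v in hX hA hA1 hB hB1 hv *; set cv := cos v in hX hA hA1 hB hB1 hv *.
set A := cu * cv - su * sv in hA hA1.
set B := cv * cu + sv * su in hB hB1.
set X := sv * cu - cv * su in hX.
have hY : 0 <= A + (2 * A ^+ 2 - 1) * B.
  have [h|h] := lerP 0 (2 * A ^+ 2 - 1).
    have : 0 <= (2 * A ^+ 2 - 1) * B by apply: mulr_ge0.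
    lra.
  have : 0 <= (2 * A - 1) * (A + 1) by apply: mulr_ge0; lra.
  have : 0 <= - (2 * A ^+ 2 - 1) * (1 - B) by apply: mulr_ge0; lra.
  nra.
have E : 2 * (sv * cv ^+ 3 - su * cu ^+ 3) - X * (A + (2 * A ^+ 2 - 1) * B) =
  (su ^+ 2 + cu ^+ 2 - 1) * (
   (-2) * su * sv ^+ 4 * cu + (-2) * sv * cv + (-2) * sv * cu ^+ 2 * cv ^+ 3
   + (-2) * su * sv ^+ 2 * cu * cv ^+ 2 + 2 * su ^+ 2 * sv ^+ 3 * cv + 2 * sv ^+ 3 * cv)
  + (sv ^+ 2 + cv ^+ 2 - 1) * (
   2 * su * cu ^+ 3 * cv ^+ 2 + (-2) * sv * cu ^+ 2 * cv + 2 * su * sv ^+ 2 * cu ^+ 3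
   + (-2) * su * sv ^+ 2 * cu + 2 * su * cu ^+ 3 + 2 * sv * cv)
  by rewrite /X /A /B; ring.
have e1 : su ^+ 2 + cu ^+ 2 - 1 = 0 by rewrite (addrC (su ^+ 2)) hu subrr.
have e2 : sv ^+ 2 + cv ^+ 2 - 1 = 0 by rewrite (addrC (sv ^+ 2)) hv subrr.
rewrite e1 e2 !mul0r addr0 in E.
have : 0 <= X * (A + (2 * A ^+ 2 - 1) * B) by apply: mulr_ge0.
lra.
Qed.

Lemma dineq (p u v : R) : 4/3 < p -> 0 < u -> u < v -> u + v <= pi / 3 ->
  sin u `^ (p - 1) * cos u <= sin v `^ (p - 1) * cos v.
Proof.
move=> p43 u0 uv uv3.
have hpi := @pi_gt0 R.
have su0 : 0 < sin u by apply: sin_gt0_pi; apply/andP; split; lra.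
have sv0 : 0 < sin v by apply: sin_gt0_pi; apply/andP; split; lra.
have suv : sin u < sin v.
  rewrite ltr_sin // in_itv/=; apply/andP; split; lra.
have cv0 : 0 < cos v by apply: cos_gt0_pihalf; apply/andP; split; lra.
have cuv : cos v < cos u.
  rewrite ltr_cos // in_itv/=; apply/andP; split; lra.
have K : sin u * cos u ^+ 3 <= sin v * cos v ^+ 3 by apply: kineq.
set su := sin u in su0 suv K *; set sv := sin v in sv0 suv K *.
set cu := cos u in cuv K *; set cv := cos v in cv0 cuv K *.
set r := sv / su; set c := cu / cv.
have c1 : 1 <= c by rewrite /c ler_pdivlMr // mul1r ltW.
have r1 : 1 <= r by rewrite /r ler_pdivlMr // mul1r ltW.
have k0 : 0 < su * cv ^+ 3 by apply: mulr_gt0 => //; apply: exprn_gt0.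
have c3r : c ^+ 3 <= r.
  rewrite -(ler_pM2r k0).
  have -> : c ^+ 3 * (su * cv ^+ 3) = su * cu ^+ 3.
    rewrite /c; field; apply/eqP; lra.
  have -> : r * (su * cv ^+ 3) = sv * cv ^+ 3.
    rewrite /r; field; apply/eqP; lra.
  exact: K.
have hrc : c <= r `^ (p - 1).
  have h1 : c = c `^ 1 by rewrite powRr1 //; lra.
  have h2 : c `^ 1 <= c `^ (3 * (p - 1)) by apply: ler_powR => //; lra.
  have h3 : c `^ (3 * (p - 1)) = (c ^+ 3) `^ (p - 1).
    by rewrite powRrM -powR_mulrn //; lra.
  have h4 : (c ^+ 3) `^ (p - 1) <= r `^ (p - 1).
    apply: ge0_ler_powR => //; rewrite ?nnegrE; try lra.
    apply: exprn_ge0; lra.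
  lra.
have esv : sv = r * su by rewrite /r; field; apply/eqP; lra.
have ecu : cu = c * cv by rewrite /c; field; apply/eqP; lra.
rewrite [in X in _ <= X]esv powRM; try lra.
rewrite ecu.
have P0 : 0 <= su `^ (p - 1) * cv by apply: mulr_ge0 => //; [apply: powR_ge0 | lra].
nra.
Qed.

Lemma dpowR (p y : R) : 0 < y -> is_derive y 1 ((powR (R:=R))^~ p) (p * y `^ (p - 1)).
Proof.
move=> y0.
have hd : derivable ((powR (R:=R))^~ p) y 1 by apply: derivable_powR; rewrite in_itv/= y0 //.
have := derivableP hd; rewrite -derive1E (@powR_derive1 R p) // in_itv/= y0 //.
Qed.

Lemma dlin (a x : R) : is_derive x 1 (fun y => a - y) (-1).
Proof.
have -> : (fun y => a - y) = (cst a) - id by apply: funext => y.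
rewrite -[-1]add0r.
apply: is_deriveB.
Qed.

Lemma dF (p alpha x : R) : 0 < x -> x < alpha -> alpha <= pi / 3 ->
  is_derive x 1 (fun y => sin y `^ p + sin (alpha - y) `^ p)
    (p * sin x `^ (p - 1) * cos x - p * sin (alpha - x) `^ (p - 1) * cos (alpha - x)).
Proof.
move=> x0 xa a3; have hpi := @pi_gt0 R.
have s1 : 0 < sin x by apply: sin_gt0_pi; apply/andP; split; lra.
have s2 : 0 < sin (alpha - x) by apply: sin_gt0_pi; apply/andP; split; lra.
have d1 : is_derive x 1 ((powR (R:=R))^~ p \o sin) (p * sin x `^ (p - 1) * cos x).
  exact: (is_derive1_comp (dpowR p (sin x) s1) (is_derive_sin x)).
have d2' : is_derive x 1 (sin \o (fun y => alpha - y)) (cos (alpha - x) * -1).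
  exact: (is_derive1_comp (f:=sin) (g:=fun y => alpha - y) (is_derive_sin (alpha - x)) (dlin alpha x)).
have d2 : is_derive x 1 ((powR (R:=R))^~ p \o (sin \o (fun y => alpha - y)))
   (p * sin (alpha - x) `^ (p - 1) * (cos (alpha - x) * -1)).
  exact: (is_derive1_comp (dpowR p (sin (alpha - x)) s2) d2').
have := is_deriveD d1 d2.
have -> : ((powR (R:=R))^~ p \o sin) + ((powR (R:=R))^~ p \o (sin \o (fun y => alpha - y)))
   = (fun y => sin y `^ p + sin (alpha - y) `^ p) by apply: funext.
by rewrite mulrN1 mulrN -mulrA.
Qed.

End S.

Theorem lemma2p8 (R : realType) (p alpha : R) :
  4 / 3 < p -> p <= 173 / 100 -> 0 <= alpha -> alpha <= pi / 3 ->
  (forall rho : R, 0 <= rho -> rho <= alpha / 2 ->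
     Rfun p alpha 0 <= Rfun p alpha rho) \/
  (forall rho : R, 0 <= rho -> rho <= alpha / 2 ->
     Rfun p alpha (alpha / 2) <= Rfun p alpha rho).
Proof.
move=> hp1 hp2 a0 a3; right => rho r0 r1.
have hpi := @pi_gt0 R.
have [->|rne] := eqVneq rho (alpha / 2); first by [].
have rlt : rho < alpha / 2 by rewrite lt_neqAle rne.
have [->|rn0] := eqVneq rho 0.
  rewrite /Rfun sin0 powR0; last by apply/eqP; lra.
  rewrite add0r subr0.
  have -> : alpha - alpha / 2 = alpha / 2 by field.
  have ea : (alpha / 2) *+ 2 = alpha by rewrite mulr2n; field.
  have hsa : sin alpha = (2 * cos (alpha / 2)) * sin (alpha / 2).
    by rewrite -{1}ea sin_mulr2n mulr2n; ring.
  have hca : cos alpha = 2 * cos (alpha / 2) ^+ 2 - 1.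
    by rewrite -{1}ea cos_mulr2n mulr2n; ring.
  have c0 : 0 <= cos (alpha / 2).
    by apply: cos_ge0_pihalf; apply/andP; split; lra.
  have s0 : 0 <= sin (alpha / 2).
    by apply: sin_ge0_pi; apply/andP; split; lra.
  have ch := @cos_ge_half R alpha a0 a3.
  rewrite hca in ch.
  set y := 2 * cos (alpha / 2) in hsa.
  have y0 : 0 <= y by rewrite /y; lra.
  have y3 : 3 <= y ^+ 2 by rewrite /y; nra.
  have y1 : 1 <= y by nra.
  rewrite hsa powRM //.
  have hy1 : y `^ (4/3) <= y `^ p by apply: ler_powR => //; lra.
  have hy2 : 2 <= y `^ (4/3).
    rewrite leNgt; apply/negP => h.
    have h3 := @gt0_ltr_powR R 3 ltac:(lra) (y `^ (4/3)) 2 (powR_ge0 _ _) ltac:(rewrite nnegrE; lra) h.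
    rewrite -powRrM in h3.
    have e4 : 4 / 3 * 3 = (4%:R : R) by field.
    have e3 : (3 : R) = 3%:R by [].
    rewrite e4 powR_mulrn // [X in _ < X]powR_mulrn in h3; last by lra.
    have : 9 <= y ^+ 4 by rewrite (_ : 4 = 2 * 2)%N // exprM; nra.
    rewrite (_ : 2 ^+ 3 = 8 :> R) in h3; last by rewrite !exprS expr0; lra.
    lra.
  have sp0 : 0 <= sin (alpha / 2) `^ p by apply: powR_ge0.
  nra.
have rp : 0 < rho by rewrite lt_neqAle eq_sym rn0.
rewrite /Rfun.
set F := fun y => sin y `^ p + sin (alpha - y) `^ p.
change (F (alpha / 2) <= F rho).
have hd x : x \in `]0, alpha / 2[ -> is_derive x 1 F
    (p * sin x `^ (p - 1) * cos x - p * sin (alpha - x) `^ (p - 1) * cos (alpha - x)).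
  rewrite in_itv/= => /andP[h1 h2]; apply: dF => //; lra.
apply: (@ler0_derive1_le_oc R F 0 (alpha / 2)).
- by move=> x /hd [].
- move=> x hx; rewrite derive1E; have [_ ->] := hd x hx.
  move: hx; rewrite in_itv/= => /andP[h1 h2].
  have := @dineq R p x (alpha - x) hp1 h1 ltac:(lra) ltac:(lra).
  have : 0 < p by lra.
  nra.
- apply: continuous_in_subspaceT => x; rewrite inE /= in_itv/= => /andP[h1 h2].
  apply: differentiable_continuous; apply/derivable1_diffP.
  have [] := @dF R p alpha x h1 ltac:(lra) a3; by [].
- by rewrite in_itv/= lexx andbT; lra.
- by rewrite in_itv/= rp; lra.
- exact: ltW.
Qed.
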